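(* Let $R$ be a commutative ring with identity whose set of zero-divisors $Z_R$ contains a nonzero element, $n>1$, $S=M_n(R)$, and let $d$ denote distance in the orthogonality graph $O(S)$. (1) For every vertex $A$ of $O(S)$ there exists $b\in Z_R\setminus\{0\}$ with $d(A,bE)\le 2$ (and $bE$ is a vertex of $O(S)$). (2) If $A_1,A_2$ are vertices of $O(S)$ with $\operatorname{Ann}(\det A_1)\cap\operatorname{Ann}(\det A_2)\ne0$, then $d(A_1,A_2)\le 4$.
   Context: The orthogonality graph $O(S)$ of a ring $S$ is the undirected graph whose vertices are the nonzero two-sided zero-divisors of $S$, distinct vertices $x,y$ being adjacent iff $xy=yx=0$; $d$ is the graph distance. $Z_R$ is the set of zero-divisors of $R$ (including $0$), $\operatorname{Ann}(a)=\{x\in R:ax=0\}$, $E$ is the identity matrix. *)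

(* Defs.v *)
From HB Require Import structures.
From mathcomp Require Import all_boot all_order all_algebra.
Set Implicit Arguments. Unset Strict Implicit. Unset Printing Implicit Defensive.
Import GRing.Theory.
Local Open Scope ring_scope.

Definition zero_divisor (R : comNzRingType) (b : R) : Prop :=
  exists c : R, c != 0 /\ b * c = 0.

Definition overtex (R : comNzRingType) (n : nat) (X : 'M[R]_n) : Prop :=
  X != 0 /\ (exists Y : 'M[R]_n, Y != 0 /\ X *m Y = 0)
         /\ (exists Z : 'M[R]_n, Z != 0 /\ Z *m X = 0).

Definition oadj (R : comNzRingType) (n : nat) (X Y : 'M[R]_n) : Prop :=
  overtex X /\ overtex Y /\ X != Y /\ X *m Y = 0 /\ Y *m X = 0.

Fixpoint owalk_le (R : comNzRingType) (n : nat) (k : nat) (X Y : 'M[R]_n) : Prop :=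
  match k with
  | 0%N => X = Y
  | k'.+1 => X = Y \/ exists Z : 'M[R]_n, oadj X Z /\ owalk_le k' Z Y
  end.

Definition odist_le (R : comNzRingType) (n : nat) (k : nat) (X Y : 'M[R]_n) : Prop :=
  overtex X /\ overtex Y /\ owalk_le k X Y.

(* Main.v *)
Require Import Defs.
From HB Require Import structures.
From mathcomp Require Import all_boot all_order all_algebra.
From Stdlib Require Import Classical.
Import GRing.Theory.
Local Open Scope ring_scope.
Set Implicit Arguments. Unset Strict Implicit.

Definition Tsel {R : comNzRingType} {n k} (f : 'I_k -> 'I_n) : 'M[R]_(k, n) :=
  \matrix_(i, j) (f i == j)%:R.
Definition Ssel {R : comNzRingType} {n k} (g : 'I_k -> 'I_n) : 'M[R]_(n, k) :=
  \matrix_(i, j) (i == g j)%:R.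

Lemma mxsubE (R : comNzRingType) n (A : 'M[R]_n) k (f g : 'I_k -> 'I_n) :
  mxsub f g A = Tsel f *m A *m Ssel g :> 'M[R]_k.
Proof.
apply/matrixP => i j; rewrite /Tsel /Ssel !mxE.
rewrite (bigD1 (g j)) //= big1 ?addr0.
  rewrite !mxE eqxx mulr1 (bigD1 (f i)) //= big1 ?addr0 ?mxE ?eqxx ?mul1r //.
  by move=> a /negbTE ha; rewrite mxE eq_sym ha mul0r.
by move=> b /negbTE hb; rewrite mxE hb mulr0.
Qed.

Definition upd {n k} (f : 'I_k -> 'I_n) (l : 'I_k) (r : 'I_n) := fun j => if j == l then r else f j.

Lemma TselM (R : comNzRingType) n k m (f : 'I_k -> 'I_n) (B : 'M[R]_(n, m)) j c :
  (Tsel f *m B) j c = B (f j) c.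
Proof.
rewrite /Tsel !mxE (bigD1 (f j)) //= big1 ?addr0 ?mxE ?eqxx ?mul1r //.
by move=> a /negbTE ha; rewrite mxE eq_sym ha mul0r.
Qed.

Lemma MSsel (R : comNzRingType) n k m (g : 'I_k -> 'I_n) (B : 'M[R]_(m, n)) r i :
  (B *m Ssel g) r i = B r (g i).
Proof.
rewrite /Ssel !mxE (bigD1 (g i)) //= big1 ?addr0 ?mxE ?eqxx ?mulr1 //.
by move=> a /negbTE ha; rewrite mxE ha mulr0.
Qed.

Lemma row_adj (R : comNzRingType) n (A : 'M[R]_n) k (f g : 'I_k -> 'I_n) l r :
  (A *m Ssel g *m \adj (mxsub f g A)) r l = \det (mxsub (upd f l r) g A).
Proof.
rewrite mxE (expand_det_row _ l); apply: eq_bigr => i _.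
rewrite MSsel mxE [mxsub _ g A l i]mxE /upd eqxx; congr (_ * _).
rewrite /cofactor; congr (_ * \det _).
apply/matrixP => a b; rewrite !mxE /upd.
by rewrite eq_sym (negbTE (neq_lift l a)).
Qed.

Lemma col_adj (R : comNzRingType) n (A : 'M[R]_n) k (f g : 'I_k -> 'I_n) l c :
  (\adj (mxsub f g A) *m (Tsel f *m A)) l c = \det (mxsub f (upd g l c) A).
Proof.
rewrite mxE (expand_det_col _ l); apply: eq_bigr => j _.
rewrite TselM mxE [mxsub f _ A j l]mxE /upd eqxx mulrC; congr (_ * _).
rewrite /cofactor; congr (_ * \det _).
apply/matrixP => a b; rewrite !mxE /upd.
by rewrite eq_sym (negbTE (neq_lift l b)).
Qed.

Lemma MTsel_inj (R : comNzRingType) n k m (f : 'I_k -> 'I_n) (B : 'M[R]_(m, k)) a j :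
  injective f -> (B *m Tsel f) a (f j) = B a j.
Proof.
move=> fi; rewrite /Tsel !mxE (bigD1 j) //= big1 ?addr0 ?mxE ?eqxx ?mulr1 //.
move=> j' hj; rewrite mxE.
have -> : (f j' == f j) = false by apply/negbTE; apply: contra hj => /eqP /fi ->.
by rewrite mulr0.
Qed.

Lemma SselM_inj (R : comNzRingType) n k m (g : 'I_k -> 'I_n) (B : 'M[R]_(k, m)) i c :
  injective g -> (Ssel g *m B) (g i) c = B i c.
Proof.
move=> gi; rewrite /Ssel !mxE (bigD1 i) //= big1 ?addr0 ?mxE ?eqxx ?mul1r //.
move=> j' hj; rewrite mxE.
have -> : (g i == g j') = false by apply/negbTE; apply: contra hj => /eqP /gi ->.
by rewrite mul0r.
Qed.

Lemma inj_row (R : comNzRingType) n (A : 'M[R]_n) k (f g : 'I_k -> 'I_n) :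
  \det (mxsub f g A) != 0 -> injective f.
Proof.
move=> h i1 i2 e; apply/eqP; apply: contraNT h => ne; apply/eqP.
by apply: (determinant_alternate ne) => j; rewrite !mxE e.
Qed.

Lemma inj_col (R : comNzRingType) n (A : 'M[R]_n) k (f g : 'I_k -> 'I_n) :
  \det (mxsub f g A) != 0 -> injective g.
Proof.
move=> h i1 i2 e; apply/eqP; apply: contraNT h => ne; apply/eqP.
rewrite -det_tr.
by apply: (determinant_alternate ne) => j; rewrite !mxE e.
Qed.

Lemma exists_notin n m (f0 : 'I_m -> 'I_n) : (m < n)%N -> exists r, forall i, f0 i != r.
Proof.
move=> hmn; apply: NNPP => H.
have sub : [set: 'I_n] \subset [seq f0 x | x in 'I_m].
  apply/subsetP => r _; apply: NNPP => H2; apply: H; exists r => i.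
  by apply/negP => /eqP e; apply: H2; rewrite -e; apply: image_f.
have := subset_leq_card sub; rewrite cardsT card_ord => h.
have := leq_trans h (leq_image_card _ _); rewrite card_ord => h2.
by move: (leq_trans hmn h2); rewrite ltnn.
Qed.

Definition kills {R : comNzRingType} {n} (A : 'M[R]_n) k (x : R) :=
  forall f g : 'I_k -> 'I_n, x * \det (mxsub f g A) = 0.

Definition ext {n m} (f0 : 'I_m -> 'I_n) (r : 'I_n) : 'I_m.+1 -> 'I_n :=
  fun i => if unlift ord_max i is Some j then f0 j else r.

Lemma ext_inj n m (f0 : 'I_m -> 'I_n) r :
  injective f0 -> (forall i, f0 i != r) -> injective (ext f0 r).
Proof.
move=> fi hr i1 i2; rewrite /ext.
case: unliftP => [j1 ->|->]; case: unliftP => [j2 ->|->] //.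
- by move/fi ->.
- by move=> e; move: (hr j1); rewrite e eqxx.
- by move=> e; move: (hr j2); rewrite e eqxx.
Qed.

Lemma ext_lift n m (f0 : 'I_m -> 'I_n) r j : ext f0 r (lift ord_max j) = f0 j.
Proof. by rewrite /ext liftK. Qed.

Lemma key (R : comNzRingType) n (A : 'M[R]_n) k : forall x : R,
  (k <= n)%N -> x != 0 -> kills A k x ->
  exists C : 'M[R]_n, C != 0 /\ A *m C = 0 /\ C *m A = 0 /\
     forall b, b * x = 0 -> b *: C = 0.
Proof.
elim: k => [|m IH] x hk hx hK.
  have := hK (fun i : 'I_0 => @Ordinal n i (leq_trans (ltn_ord i) (leq0n n)))
             (fun i : 'I_0 => @Ordinal n i (leq_trans (ltn_ord i) (leq0n n))).
  by rewrite det_mx00 mulr1 => e; move: hx; rewrite e eqxx.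
case: (classic (kills A m x)) => [hm|hm]; first by apply: IH => //; apply: ltnW.
have [f0 [g0 h0]] : exists f0 g0 : 'I_m -> 'I_n, x * \det (mxsub f0 g0 A) <> 0.
  apply: NNPP => H; apply: hm => f g; apply: NNPP => H2; apply: H; exists f, g.
  exact: H2.
have hd : \det (mxsub f0 g0 A) != 0.
  by apply/eqP => e; apply: h0; rewrite e mulr0.
have [r hr] := @exists_notin n m f0 hk.
have [c hc] := @exists_notin n m g0 hk.
set f := ext f0 r; set g := ext g0 c.
have fi : injective f by apply: ext_inj => //; apply: inj_row hd.
have gi : injective g by apply: ext_inj => //; apply: inj_col hd.
set M := mxsub f g A.
exists (x *: (Ssel g *m \adj M *m Tsel f)); split; last split; last split.
- apply/eqP => hC.
  have := congr1 (fun N : 'M[R]_n => N (g ord_max) (f ord_max)) hC.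
  rewrite /= mxE MTsel_inj // SselM_inj // mxE !mxE /cofactor.
  have -> : row' ord_max (col' ord_max M) = mxsub f0 g0 A.
    by apply/matrixP => a b; rewrite !mxE /f /g !ext_lift.
  rewrite mulrCA => e; apply: h0.
  move: e; set s := (_ ^+ _) => e; have : s * (s * (x * \det (mxsub f0 g0 A))) = x * \det (mxsub f0 g0 A) by rewrite /s signrMK.
  by rewrite e mulr0 => <-.
- rewrite -scalemxAr !mulmxA scalemxAl.
  have -> : x *: (A *m Ssel g *m \adj M) = 0.
    by apply/matrixP => a l; rewrite [LHS]mxE row_adj hK mxE.
  by rewrite mul0mx.
- rewrite -scalemxAl -!mulmxA scalemxAr.
  have -> : x *: (\adj M *m (Tsel f *m A)) = 0.
    by apply/matrixP => l a; rewrite [LHS]mxE col_adj hK mxE.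
  by rewrite mulmx0.
- by move=> b hb; rewrite scalerA hb scale0r.
Qed.

From mathcomp Require Import ring.

Lemma det_zd (R : comNzRingType) n (A Y : 'M[R]_n) :
  Y != 0 -> A *m Y = 0 -> exists x, x != 0 /\ \det A * x = 0.
Proof.
move=> Y0 AY.
have [i [j hij]] : exists i j, Y i j != 0.
  apply: NNPP => H; move/eqP: Y0; apply; apply/matrixP => i j; rewrite mxE.
  by case: (eqVneq (Y i j) 0) => // H2; exfalso; apply: H; exists i, j.
exists (Y i j); split => //.
have := congr1 (fun N => (\adj A *m N) i j) AY.
by rewrite /= mulmxA mul_adj_mx mul_scalar_mx mulmx0 !mxE.
Qed.

Lemma kills_top (R : comNzRingType) n (A : 'M[R]_n) x :
  x * \det A = 0 -> kills A n x.
Proof.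
move=> h f g; rewrite mxsubE !det_mulmx.
transitivity ((x * \det A) * (\det (Tsel f) * \det (Ssel g : 'M[R]_n))); first ring.
by rewrite h mul0r.
Qed.

Lemma pick (R : comNzRingType) (hZ : exists b : R, b != 0 /\ zero_divisor b) (d1 d2 x : R) :
  x != 0 -> d1 * x = 0 -> d2 * x = 0 ->
  exists x' b, x' != 0 /\ b != 0 /\ x' * d1 = 0 /\ x' * d2 = 0 /\ b * x' = 0.
Proof.
move=> hx h1 h2.
case: (classic (exists b, b != 0 /\ b * x = 0)) => [[b [hb hbx]]|H].
  by exists x, b; rewrite mulrC h1 mulrC h2.
have z : forall d, d * x = 0 -> d = 0.
  by move=> d hd; case: (eqVneq d 0) => // H2; exfalso; apply: H; exists d.
rewrite (z _ h1) (z _ h2).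
have [b0 [hb0 [c [hc hbc]]]] := hZ.
by exists b0, c; rewrite mulr0 mulrC hbc.
Qed.

Lemma oadj_sym (R : comNzRingType) n (X Y : 'M[R]_n) : oadj X Y -> oadj Y X.
Proof. by case=> [hX [hY [ne [h1 h2]]]]; do !split => //; rewrite eq_sym. Qed.

Lemma owalk_S (R : comNzRingType) n l : forall (X Z : 'M[R]_n), owalk_le l X Z -> owalk_le l.+1 X Z.
Proof.
elim: l => [|l IH] X Z /=; first by move=> ->; left.
case=> [->|[W [h w]]]; first by left.
by right; exists W; split => //; apply: IH.
Qed.

Lemma owalk_add (R : comNzRingType) n j l (X Z : 'M[R]_n) : owalk_le l X Z -> owalk_le (j + l) X Z.
Proof. by elim: j => [|j IH] //= h; apply: owalk_S; apply: IH. Qed.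

Lemma owalk_cat (R : comNzRingType) n k : forall l (X Y Z : 'M[R]_n),
  owalk_le k X Y -> owalk_le l Y Z -> owalk_le (k + l) X Z.
Proof.
elim: k => [|k IH] l X Y Z; first by move=> /= ->.
case=> [->|[W [h w]]] h2.
  exact: (@owalk_add R n k.+1 l Y Z h2).
by rewrite addSn /=; right; exists W; split => //; apply: IH w h2.
Qed.

Lemma scalar_vertex (R : comNzRingType) n (i : 'I_n) (b x : R) :
  b != 0 -> x != 0 -> b * x = 0 -> overtex (b%:M : 'M[R]_n).
Proof.
move=> hb hx hbx.
have xM : (x%:M : 'M[R]_n) != 0.
  by apply/eqP => /matrixP /(_ i i); rewrite !mxE eqxx mulr1n; apply/eqP.
split; first by apply/eqP => /matrixP /(_ i i); rewrite !mxE eqxx mulr1n; apply/eqP.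
have z : (0%:M : 'M[R]_n) = 0 by apply/matrixP => a c; rewrite !mxE mul0rn.
split; exists x%:M; split => //; rewrite -scalar_mxM.
  by rewrite hbx.
by rewrite mulrC hbx.
Qed.

Lemma local_path (R : comNzRingType) n (A C : 'M[R]_n) (b : R) :
  overtex A -> overtex (b%:M : 'M[R]_n) -> C != 0 -> A *m C = 0 -> C *m A = 0 -> b *: C = 0 ->
  owalk_le 2 A b%:M /\ owalk_le 2 b%:M A.
Proof.
move=> hA hB C0 AC CA bC.
case: (eqVneq A b%:M) => [->|ne]; first by split; left.
case: (eqVneq (b *: A) 0) => [hbA|hbA].
  have ad : oadj A b%:M by do !split => //; rewrite ?mul_mx_scalar ?mul_scalar_mx.
  split; right; [exists b%:M | exists A]; split; try by left.
    by [].
  exact: oadj_sym.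
have CA' : C != A by apply/eqP => e; move: hbA; rewrite -e bC eqxx.
have CB : C != b%:M by apply/eqP => e; move: hbA; rewrite -mul_mx_scalar -e AC eqxx.
have hC : overtex C.
  case: hA => [A0 _]; split => //; split; exists A; split => //.
have a1 : oadj A C by do !split => //; rewrite eq_sym.
have a2 : oadj C b%:M by do !split => //; rewrite ?mul_mx_scalar ?mul_scalar_mx.
split.
  by right; exists C; split => //; right; exists b%:M; split => //.
by right; exists C; split; [exact: oadj_sym|]; right; exists A; split => //; exact: oadj_sym.
Qed.

Unset Implicit Arguments.
Theorem corollary3 (R : comNzRingType) (n : nat)
  (hZ : exists b : R, b != 0 /\ zero_divisor b) (hn : (1 < n)%N) :
  (forall A : 'M[R]_n, overtex A ->
     exists b : R, zero_divisor b /\ b != 0 /\ overtex (b%:M : 'M[R]_n)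
                   /\ odist_le 2 A b%:M)
  /\
  (forall A1 A2 : 'M[R]_n, overtex A1 -> overtex A2 ->
     (exists x : R, x != 0 /\ \det A1 * x = 0 /\ \det A2 * x = 0) ->
     odist_le 4 A1 A2).
Proof.
have i0 : 'I_n := Ordinal (ltnW hn).
split.
  move=> A hA.
  have [x [hx hdx]] : exists x, x != 0 /\ \det A * x = 0.
    by case: hA => [_ [[Y [Y0 AY]] _]]; apply: det_zd Y0 AY.
  have [x' [b [hx' [hb [h1 [_ hbx]]]]]] := pick hZ hx hdx hdx.
  have [C [C0 [AC [CA hCb]]]] := key (leqnn n) hx' (kills_top h1).
  have hB : overtex (b%:M : 'M[R]_n) := scalar_vertex i0 hb hx' hbx.
  exists b; split; first by exists x'.
  split => //; split => //; split => //; split => //.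
  by case: (local_path hA hB C0 AC CA (hCb _ hbx)).
move=> A1 A2 hA1 hA2 [x [hx [h1 h2]]].
have [x' [b [hx' [hb [h1' [h2' hbx]]]]]] := pick hZ hx h1 h2.
have [C1 [C10 [AC1 [CA1 hCb1]]]] := key (leqnn n) hx' (kills_top h1').
have [C2 [C20 [AC2 [CA2 hCb2]]]] := key (leqnn n) hx' (kills_top h2').
have hB : overtex (b%:M : 'M[R]_n) := scalar_vertex i0 hb hx' hbx.
have [p1 _] := local_path hA1 hB C10 AC1 CA1 (hCb1 _ hbx).
have [_ p2] := local_path hA2 hB C20 AC2 CA2 (hCb2 _ hbx).
split => //; split => //.
exact: (owalk_cat p1 p2).
Qed.
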